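(* Let $\kappa\in(0,1)$, $\Omega\neq0$ and $0<\delta<2$ be fixed. For $\tau>0$, let $2W=2W(\tau)>0$ be the interface width of the traveling wave with speed $\Omega$, i.e. the unique positive solution of $$\frac{2(1-\kappa)^2}{\tau|\Omega|\delta}+\frac{1-\kappa}{\tau|\Omega|}\,2W=\exp\Big(\frac{1-\kappa}{\kappa\tau|\Omega|}\,2W\Big)-1.$$ Then for all sufficiently small $\tau>0$ the traveling wave is unstable, i.e. the linearized eigenvalue problem $$\tau\lambda\,Z(P)=\tau\Omega\,Z'(P)-Z(P)+\kappa^{-1}\Psi(P)Z(P)-\kappa^{-1}\int_{-\infty}^{\infty}\Psi(Q)Z(Q)\,dQ,\qquad \Psi=\mathbf{1}_{(-W,W)},$$ has an eigenvalue $\lambda$ with $\operatorname{Re}\lambda>0$ (with a bounded eigenfunction).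
   Context: The traveling waves are those of the mean-field particle dynamics $\tau\partial_t x(t,p)=\sigma(t)+\delta(p-\tfrac12)-H'(x(t,p))$, where $H'(x)=x+1$ for $x\le-\kappa$, $H'(x)=-\frac{1-\kappa}{\kappa}x$ for $|x|\le\kappa$, and $H'(x)=x-1$ for $x\ge\kappa$. These waves have the form $x(t,p)=X(p-\Omega t)$ and have a spinodal stripe (values in $(-\kappa,\kappa)$) of width $2W$. An eigenvalue of the linearized problem means a $\lambda\in\mathbb{C}$ admitting a nontrivial continuous $Z:\mathbb{R}\to\mathbb{C}$ of at most linear growth that satisfies the equation away from $P=\pm W$. Instability refers to the existence of such an eigenvalue with positive real part. *)

(* Defs.v *)
From Stdlib Require Import Reals.
From Coquelicot Require Import Coquelicot.
Open Scope R_scope.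

Definition Psi (W : R) (P : R) : R :=
  if Rlt_dec (- W) P then (if Rlt_dec P W then 1 else 0) else 0.

Definition width_eq (kappa Omega delta tau W : R) : Prop :=
  2 * (1 - kappa) ^ 2 / (tau * Rabs Omega * delta)
  + (1 - kappa) / (tau * Rabs Omega) * (2 * W)
  = exp ((1 - kappa) / (kappa * tau * Rabs Omega) * (2 * W)) - 1.

(* Z : R -> C solves the linearized eigenvalue equation with eigenvalue lam,
   away from the points P = W and P = -W:
   tau lam Z(P) = tau Omega Z'(P) - Z(P) + kappa^-1 Psi(P) Z(P)
                  - kappa^-1 \int Psi(Q) Z(Q) dQ,
   where \int_R Psi Z = \int_{-W}^{W} Z. *)
Definition solves_eig (kappa Omega tau W : R) (lam : C) (Z : R -> C) : Prop :=
  forall P : R, P <> W -> P <> - W ->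
    exists dZ : C, is_derive (K := R_AbsRing) (V := C_R_NormedModule) Z P dZ /\
      Cmult (RtoC tau) (Cmult lam (Z P)) =
        Cminus
          (Cplus (Cminus (Cmult (RtoC (tau * Omega)) dZ) (Z P))
                 (Cmult (RtoC (/ kappa * Psi W P)) (Z P)))
          (Cmult (RtoC (/ kappa)) (RInt (V := C_R_CompleteNormedModule) Z (- W) W)).

Definition eigenfunction (kappa Omega tau W : R) (lam : C) (Z : R -> C) : Prop :=
  (exists P, Z P <> RtoC 0) /\
  (forall P, continuous Z P) /\
  (exists A B : R, forall P, Cmod (Z P) <= A + B * Rabs P) /\
  solves_eig kappa Omega tau W lam Z.

Definition bounded_fun (Z : R -> C) : Prop :=
  exists M : R, forall P, Cmod (Z P) <= M.

(* Main.v *)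
Require Import Defs.
From Stdlib Require Import Reals.
From Coquelicot Require Import Coquelicot.
From Stdlib Require Import Lra Lia.
Open Scope R_scope.

Definition cexp (z : C) : C := (exp (Re z) * cos (Im z), exp (Re z) * sin (Im z)).

Lemma Ceq (x y : C) : Re x = Re y -> Im x = Im y -> x = y.
Proof. destruct x, y; simpl; intros; subst; reflexivity. Qed.

Lemma cexp_add z w : cexp (Cplus z w) = Cmult (cexp z) (cexp w).
Proof.
  destruct z as [a b], w as [c d]; unfold cexp; apply Ceq; simpl;
  rewrite exp_plus; [rewrite cos_plus | rewrite sin_plus]; ring.
Qed.

Lemma Cmod_cexp z : Cmod (cexp z) = exp (Re z).
Proof.
  destruct z as [a b]; unfold cexp, Cmod, Re, Im; cbn [fst snd].
  replace ((exp a * cos b) ^ 2 + (exp a * sin b) ^ 2) with (exp a ^ 2)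
    by (pose proof (sin2_cos2 b) as H; unfold Rsqr in H;
        transitivity (exp a ^ 2 * (sin b * sin b + cos b * cos b)); [rewrite H; ring | ring]).
  rewrite sqrt_pow2; [reflexivity| left; apply exp_pos].
Qed.

Lemma is_derive_C (f g : R -> R) x df dg :
  is_derive f x df -> is_derive g x dg ->
  is_derive (V := C_R_NormedModule) (fun t => ((f t, g t) : C)) x ((df, dg) : C).
Proof.
  intros Hf Hg.
  unfold is_derive in *.
  apply (filterdiff_comp_2 (K := R_AbsRing) (V := R_NormedModule) (U := R_NormedModule)
     (W := C_R_NormedModule) f g (fun u v => (u, v)) _ _ (fun u v => (u, v)) Hf Hg).
  apply filterdiff_linear.
  split.
  - intros [] []; reflexivity.
  - intros k []; reflexivity.
  - exists 1. split. lra. intros []. rewrite Rmult_1_l. apply Rle_refl.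
Qed.

Lemma continuous_C (f g : R -> R) x :
  continuous f x -> continuous g x -> continuous (fun t => ((f t, g t) : C)) x.
Proof.
  intros Hf Hg.
  apply (continuous_comp_2 (U:=R_UniformSpace) (V:=R_UniformSpace) (W:=R_UniformSpace) (X:=C_UniformSpace) f g (fun u v => (u,v))); auto.
  apply continuous_ext with (f := fun p : R * R => p).
  intros []; reflexivity.
  intros P HP. exact HP.
Qed.



Definition CLog (z : C) : C := (ln (Cmod z), atan (Im z / Re z)).

Lemma cexp_CLog z : 0 < Re z -> cexp (CLog z) = z.
Proof.
  destruct z as [x y]; unfold CLog, cexp, Re, Im; cbn [fst snd]; intros Hx.
  assert (Hm2 : Cmod (x, y) ^ 2 = x ^ 2 + y ^ 2) by (rewrite Cmod2_alt; reflexivity).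
  assert (Hm : 0 < Cmod (x, y)).
  { apply Cmod_gt_0. intro H. injection H. lra. }
  rewrite exp_ln by exact Hm.
  assert (Hs : sqrt (1 + (y / x)²) = Cmod (x, y) / x).
  { rewrite <- (sqrt_Rsqr (Cmod (x, y) / x)).
    - f_equal. unfold Rsqr. field_simplify_eq; [|lra]. 
      replace (Cmod (x, y) * Cmod (x, y)) with (Cmod (x, y) ^ 2) by ring. rewrite Hm2. ring.
    - apply Rlt_le, Rdiv_lt_0_compat; lra. }
  rewrite cos_atan, sin_atan, Hs. apply Ceq; cbn [fst snd Re Im]; field; lra.
Qed.

Lemma Cmod_le_sum (z : C) : Cmod z <= Rabs (Re z) + Rabs (Im z).
Proof.
  destruct z as [x y]; unfold Cmod, Re, Im; cbn [fst snd].
  rewrite <- (sqrt_Rsqr (Rabs x + Rabs y)) by (pose proof (Rabs_pos x); pose proof (Rabs_pos y); lra).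
  apply sqrt_le_1_alt. unfold Rsqr.
  pose proof (Rabs_pos x); pose proof (Rabs_pos y).
  replace (x ^ 2) with (Rabs x * Rabs x) by (rewrite <- Rabs_mult, Rabs_right; [ring| nra]).
  replace (y ^ 2) with (Rabs y * Rabs y) by (rewrite <- Rabs_mult, Rabs_right; [ring| nra]).
  nra.
Qed.

Lemma im_le_Cmod (c : C) : Rabs (Im c) <= Cmod c.
Proof.
  destruct c as [x y]. pose proof (Rmax_Cmod (x, y)). cbn in *.
  pose proof (Rmax_r (Rabs x) (Rabs y)). lra.
Qed.

Lemma Cmod_rev (z w : C) : Rabs (Cmod z - Cmod w) <= Cmod (Cminus z w).
Proof.
  pose proof (Cmod_triangle w (Cminus z w)) as H1.
  pose proof (Cmod_triangle z (Copp (Cminus z w))) as H2.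
  replace (Cplus w (Cminus z w)) with z in H1 by (destruct z, w; apply Ceq; simpl; ring).
  replace (Cplus z (Copp (Cminus z w))) with w in H2 by (destruct z, w; apply Ceq; simpl; ring).
  rewrite Cmod_opp in H2.
  apply Rabs_le; lra.
Qed.

Lemma ln_le_sub1 x : 0 < x -> ln x <= x - 1.
Proof. intros Hx. pose proof (exp_ineq1_le (ln x)). rewrite exp_ln in H; lra. Qed.

Lemma ln_lip a b : 1/2 <= a -> 1/2 <= b -> Rabs (ln a - ln b) <= 2 * Rabs (a - b).
Proof.
  intros Ha Hb.
  assert (H1 : ln a - ln b <= (a - b) / b).
  { rewrite <- ln_div by lra. pose proof (ln_le_sub1 (a / b)).
    replace ((a - b) / b) with (a / b - 1) by (field; lra). apply H. apply Rdiv_lt_0_compat; lra. }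
  assert (H2 : ln b - ln a <= (b - a) / a).
  { rewrite <- ln_div by lra. pose proof (ln_le_sub1 (b / a)).
    replace ((b - a) / a) with (b / a - 1) by (field; lra). apply H. apply Rdiv_lt_0_compat; lra. }
  assert (H3 : (a - b) / b <= 2 * Rabs (a - b)).
  { apply Rmult_le_reg_r with b; [lra|]. unfold Rdiv. rewrite Rmult_assoc, Rinv_l by lra.
    pose proof (Rle_abs (a - b)). pose proof (Rabs_pos (a-b)). nra. }
  assert (H4 : (b - a) / a <= 2 * Rabs (a - b)).
  { apply Rmult_le_reg_r with a; [lra|]. unfold Rdiv. rewrite Rmult_assoc, Rinv_l by lra.
    rewrite Rabs_minus_sym. pose proof (Rle_abs (b - a)). pose proof (Rabs_pos (b-a)). nra. }
  apply Rabs_le; lra.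
Qed.

Lemma atan_lip a b : Rabs (atan a - atan b) <= Rabs (a - b).
Proof.
  destruct (MVT_gen atan b a (fun x => / (1 + x ^ 2))) as [c [_ Hc]].
  - intros x _. apply is_derive_Reals, derivable_pt_lim_atan.
  - intros x _. apply derivable_continuous_pt. exists (/ (1 + x ^ 2)). apply derivable_pt_lim_atan.
  - rewrite Hc, Rabs_mult. 
    assert (0 < / (1 + c ^ 2) <= 1).
    { split. apply Rinv_0_lt_compat. nra. rewrite <- Rinv_1. apply Rinv_le_contravar; nra. }
    rewrite (Rabs_right (/ (1 + c ^ 2))) by lra. pose proof (Rabs_pos (a - b)). nra.
Qed.

Lemma CLog_lip z1 z2 : Cmod (Cminus z1 1) <= 1/2 -> Cmod (Cminus z2 1) <= 1/2 ->
  Cmod (Cminus (CLog z1) (CLog z2)) <= 10 * Cmod (Cminus z1 z2).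
Proof.
  intros H1 H2.
  set (c := Cmod (Cminus z1 z2)).
  pose proof (re_le_Cmod (Cminus z1 z2)) as Hx. pose proof (im_le_Cmod (Cminus z1 z2)) as Hy.
  fold c in Hx, Hy.
  pose proof (re_le_Cmod (Cminus z1 1)) as R1. pose proof (re_le_Cmod (Cminus z2 1)) as R2.
  pose proof (im_le_Cmod (Cminus z1 1)) as I1. pose proof (im_le_Cmod (Cminus z2 1)) as I2.
  pose proof (Cmod_rev z1 z2) as Hrev. fold c in Hrev.
  destruct z1 as [x1 y1], z2 as [x2 y2]. unfold CLog.
  assert (Hm1 : 1/2 <= Cmod (x1, y1)) by (pose proof (re_le_Cmod (x1, y1)); simpl in *; pose proof (Rle_abs x1);
    apply Rabs_le_between in R1; lra).
  assert (Hm2 : 1/2 <= Cmod (x2, y2)) by (pose proof (re_le_Cmod (x2, y2)); simpl in *; pose proof (Rle_abs x2);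
    apply Rabs_le_between in R2; lra).
  simpl in Hx, Hy, R1, R2, I1, I2.
  replace (y1 + - 0) with y1 in I1 by ring. replace (y2 + - 0) with y2 in I2 by ring.
  apply Rabs_le_between in R1. apply Rabs_le_between in R2.
  apply Rabs_le_between in I1. apply Rabs_le_between in I2.
  assert (X1 : 1/2 <= x1 <= 3/2) by lra. assert (X2 : 1/2 <= x2 <= 3/2) by lra.
  assert (Y2 : -1/2 <= y2 <= 1/2) by lra.
  clear R1 R2 I1 I2.
  eapply Rle_trans; [apply Cmod_le_sum|]. simpl.
  assert (HA : Rabs (ln (Cmod (x1, y1)) - ln (Cmod (x2, y2))) <= 2 * c).
  { eapply Rle_trans; [apply ln_lip; auto|]. lra. }
  assert (HB : Rabs (y1 / x1 - y2 / x2) <= 8 * c).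
  { replace (y1 / x1 - y2 / x2) with (((y1 - y2) * x2 - y2 * (x1 - x2)) / (x1 * x2)) by (field; lra).
    unfold Rdiv. rewrite Rabs_mult, Rabs_inv, (Rabs_right (x1 * x2)) by nra.
    apply Rmult_le_reg_r with (x1 * x2); [nra|]. rewrite Rmult_assoc, Rinv_l by nra.
    rewrite Rmult_1_r. unfold Rminus at 1.
    eapply Rle_trans; [apply Rabs_triang|]. rewrite Rabs_Ropp, !Rabs_mult.
    rewrite (Rabs_right x2) by lra.
    assert (Rabs y2 <= 1/2) by (apply Rabs_le; lra).
    replace (x1 - x2) with (x1 + - x2) by ring. replace (y1 - y2) with (y1 + - y2) by ring.
    pose proof (Rabs_pos (y1 + - y2)). pose proof (Rabs_pos (x1 + - x2)). pose proof (Rabs_pos y2).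
    assert (Rabs (y1 + - y2) * x2 <= c * (3/2)) by nra.
    assert (Rabs y2 * Rabs (x1 + - x2) <= (1/2) * c) by nra.
    assert (0 <= c) by apply Cmod_ge_0. assert (1/4 <= x1 * x2) by nra.
    assert (c * 2 <= 8 * c * (x1 * x2)) by nra. lra. }
  pose proof (atan_lip (y1 / x1) (y2 / x2)).
  unfold Rminus in *. clearbody c. lra.
Qed.





Lemma Cmod_tri3 a b c : Cmod (Cminus a c) <= Cmod (Cminus a b) + Cmod (Cminus b c).
Proof.
  replace (Cminus a c) with (Cplus (Cminus a b) (Cminus b c))
    by (destruct a, b, c; apply Ceq; simpl; ring).
  apply Cmod_triangle.
Qed.

Lemma Cmod_sym a b : Cmod (Cminus a b) = Cmod (Cminus b a).
Proof.
  replace (Cminus a b) with (Copp (Cminus b a)) by (destruct a, b; apply Ceq; simpl; ring).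
  apply Cmod_opp.
Qed.

Lemma fixpoint_C (F : C -> C) (r q : R) : 0 <= q < 1 -> 0 <= r ->
  (forall v, Cmod v <= r -> Cmod (F v) <= r) ->
  (forall v1 v2, Cmod v1 <= r -> Cmod v2 <= r ->
     Cmod (Cminus (F v1) (F v2)) <= q * Cmod (Cminus v1 v2)) ->
  exists v, Cmod v <= r /\ F v = v.
Proof.
  intros Hq Hr Hin Hlip.
  set (u := fun n => Nat.iter n F (RtoC 0)).
  assert (Hu : forall n, Cmod (u n) <= r).
  { induction n; simpl. rewrite Cmod_0; lra. apply Hin, IHn. }
  set (d := Cmod (Cminus (u 1%nat) (u 0%nat))).
  assert (Hd : 0 <= d) by apply Cmod_ge_0.
  assert (Hstep : forall n, Cmod (Cminus (u (S n)) (u n)) <= q ^ n * d).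
  { induction n. rewrite pow_O, Rmult_1_l; apply Rle_refl.
    change (u (S (S n))) with (F (u (S n))). change (u (S n)) with (F (u n)) at 2.
    eapply Rle_trans. apply Hlip; apply Hu.
    replace (q ^ S n * d) with (q * (q ^ n * d)) by (simpl; ring). apply Rmult_le_compat_l; lra. }
  assert (Htail : forall n k, Cmod (Cminus (u (n + k)%nat) (u n)) <= d * (q ^ n - q ^ (n + k)) / (1 - q)).
  { intros n k. induction k.
    - rewrite Nat.add_0_r. replace (Cminus (u n) (u n)) with (RtoC 0) by (destruct (u n); apply Ceq; simpl; ring).
      rewrite Cmod_0. unfold Rdiv. replace (q ^ n - q ^ n) with 0 by ring. lra.
    - eapply Rle_trans. apply (Cmod_tri3 _ (u (n + k)%nat)).
      replace (n + S k)%nat with (S (n + k)) by lia.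
      pose proof (Hstep (n + k)%nat).
      replace (d * (q ^ n - q ^ S (n + k)) / (1 - q)) with
        (d * (q ^ n - q ^ (n + k)) / (1 - q) + q ^ (n + k) * d) by (simpl; field; lra).
      lra. }
  assert (Htail2 : forall n m, (n <= m)%nat -> Cmod (Cminus (u m) (u n)) <= q ^ n * (d / (1 - q))).
  { intros n m Hnm. replace m with (n + (m - n))%nat by lia.
    eapply Rle_trans. apply Htail.
    pose proof (pow_le q (n + (m - n)) ltac:(lra)).
    unfold Rdiv. rewrite <- Rmult_assoc. 
    apply Rmult_le_compat_r. left; apply Rinv_0_lt_compat; lra. nra. }
  assert (Hsmall : forall eps, 0 < eps -> exists N, forall n m, (N <= n)%nat -> (N <= m)%nat ->
             Cmod (Cminus (u m) (u n)) < eps).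
  { intros eps Heps.
    destruct (pow_lt_1_zero q ltac:(rewrite Rabs_right; lra) (eps / (d / (1 - q) + 1)))
      as [N HN].
    { apply Rdiv_lt_0_compat; auto. assert (0 <= d / (1 - q)) by (apply Rdiv_le_0_compat; lra). lra. }
    exists N. intros n m Hn Hm.
    assert (0 <= d / (1 - q)) by (apply Rdiv_le_0_compat; lra).
    assert (Hb : forall k, (N <= k)%nat -> q ^ k * (d / (1 - q)) < eps).
    { intros k Hk. specialize (HN k Hk). rewrite Rabs_right in HN by (apply Rle_ge, pow_le; lra).
      apply Rmult_lt_compat_r with (r := d / (1 - q) + 1) in HN; [|lra].
      unfold Rdiv at 2 in HN. rewrite Rmult_assoc, Rinv_l in HN by lra.
      pose proof (pow_le q k ltac:(lra)). nra. }
    destruct (Nat.le_ge_cases n m) as [Hnm | Hnm].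
    - eapply Rle_lt_trans. apply Htail2; auto. apply Hb; auto.
    - rewrite Cmod_sym. eapply Rle_lt_trans. apply Htail2; auto. apply Hb; auto. }
  assert (Hcx : Cauchy_crit (fun n => Re (u n))).
  { intros eps Heps. destruct (Hsmall eps Heps) as [N HN]. exists N. intros n m Hn Hm.
    unfold R_dist. eapply Rle_lt_trans; [|apply (HN m n); auto].
    pose proof (re_le_Cmod (Cminus (u n) (u m))). simpl in H. unfold Rminus. exact H. }
  assert (Hcy : Cauchy_crit (fun n => Im (u n))).
  { intros eps Heps. destruct (Hsmall eps Heps) as [N HN]. exists N. intros n m Hn Hm.
    unfold R_dist. eapply Rle_lt_trans; [|apply (HN m n); auto].
    pose proof (im_le_Cmod (Cminus (u n) (u m))). simpl in H. unfold Rminus. exact H. }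
  destruct (Stdlib.Reals.Rcomplete.R_complete _ Hcx) as [lx Hlx].
  destruct (Stdlib.Reals.Rcomplete.R_complete _ Hcy) as [ly Hly].
  set (v := ((lx, ly) : C)).
  assert (Hconv : forall eps, 0 < eps -> exists N, forall n, (N <= n)%nat -> Cmod (Cminus (u n) v) < 2 * eps).
  { intros eps Heps. destruct (Hlx eps Heps) as [N1 H1]. destruct (Hly eps Heps) as [N2 H2].
    exists (N1 + N2)%nat. intros n Hn.
    specialize (H1 n ltac:(lia)). specialize (H2 n ltac:(lia)). unfold R_dist in H1, H2.
    eapply Rle_lt_trans. apply Cmod_le_sum. simpl. unfold Re, Im, Rminus in H1, H2. lra. }
  assert (Hv : Cmod v <= r).
  { apply le_epsilon. intros eps Heps.
    destruct (Hconv (eps/2) ltac:(lra)) as [N HN]. specialize (HN N (le_n N)).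
    pose proof (Cmod_triangle (u N) (Cminus v (u N))).
    replace (Cplus (u N) (Cminus v (u N))) with v in H by (destruct (u N); apply Ceq; simpl; ring).
    rewrite Cmod_sym in HN. specialize (Hu N). lra. }
  exists v. split; auto.
  assert (H0 : Cmod (Cminus (F v) v) = 0).
  { apply Rle_antisym; [|apply Cmod_ge_0].
    apply le_epsilon. intros eps Heps. rewrite Rplus_0_l.
    destruct (Hconv (eps/4) ltac:(lra)) as [N HN].
    eapply Rle_trans. apply (Cmod_tri3 _ (F (u N))).
    pose proof (Hlip v (u N) Hv (Hu N)).
    change (F (u N)) with (u (S N)).
    pose proof (HN N (le_n N)). pose proof (HN (S N) (le_S _ _ (le_n N))).
    rewrite (Cmod_sym v (u N)) in H.
    pose proof (Cmod_ge_0 (Cminus (u N) v)). change (F (u N)) with (u (S N)) in H. nra. }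
  apply Cmod_eq_0 in H0. destruct (F v), v; injection H0; intros; apply Ceq; simpl; lra.
Qed.

Definition cubic (a0 a1 a2 a3 : R) (t : C) : C :=
  Cplus (Cplus (Cplus (RtoC a0) (Cmult (RtoC a1) t)) (Cmult (RtoC a2) (Cmult t t)))
        (Cmult (RtoC a3) (Cmult t (Cmult t t))).

Lemma Cmod_Rmult (a : R) (z : C) : Cmod (Cmult (RtoC a) z) = Rabs a * Cmod z.
Proof. rewrite Cmod_mult, Cmod_R. reflexivity. Qed.

Lemma cubic_bound a0 a1 a2 a3 t : Cmod t <= 1 ->
  Cmod (cubic a0 a1 a2 a3 t) <= Rabs a0 + (Rabs a1 + Rabs a2 + Rabs a3) * Cmod t.
Proof.
  intros Ht. unfold cubic.
  pose proof (Cmod_ge_0 t) as H0.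
  eapply Rle_trans. apply Cmod_triangle.
  eapply Rle_trans. apply Rplus_le_compat_r. apply Cmod_triangle.
  eapply Rle_trans. apply Rplus_le_compat_r, Rplus_le_compat_r. apply Cmod_triangle.
  rewrite !Cmod_Rmult, !Cmod_mult, Cmod_R.
  pose proof (Rabs_pos a1); pose proof (Rabs_pos a2); pose proof (Rabs_pos a3).
  assert (Cmod t * Cmod t <= Cmod t) by nra.
  assert (Cmod t * (Cmod t * Cmod t) <= Cmod t) by nra.
  nra.
Qed.

Lemma cubic_diff a0 a1 a2 a3 t1 t2 :
  Cminus (cubic a0 a1 a2 a3 t1) (cubic a0 a1 a2 a3 t2) =
  Cmult (Cminus t1 t2) (Cplus (Cplus (RtoC a1) (Cmult (RtoC a2) (Cplus t1 t2)))
     (Cmult (RtoC a3) (Cplus (Cplus (Cmult t1 t1) (Cmult t1 t2)) (Cmult t2 t2)))).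
Proof. unfold cubic. destruct t1, t2. apply Ceq; simpl; ring. Qed.

Lemma cubic_lip a0 a1 a2 a3 t1 t2 : Cmod t1 <= 1 -> Cmod t2 <= 1 ->
  Cmod (Cminus (cubic a0 a1 a2 a3 t1) (cubic a0 a1 a2 a3 t2)) <=
  3 * (Rabs a1 + Rabs a2 + Rabs a3) * Cmod (Cminus t1 t2).
Proof.
  intros H1 H2. rewrite cubic_diff, Cmod_mult.
  pose proof (Cmod_ge_0 t1); pose proof (Cmod_ge_0 t2); pose proof (Cmod_ge_0 (Cminus t1 t2)).
  assert (Cmod (Cplus (Cplus (RtoC a1) (Cmult (RtoC a2) (Cplus t1 t2)))
     (Cmult (RtoC a3) (Cplus (Cplus (Cmult t1 t1) (Cmult t1 t2)) (Cmult t2 t2)))) <=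
     3 * (Rabs a1 + Rabs a2 + Rabs a3)).
  { eapply Rle_trans. apply Cmod_triangle.
    eapply Rle_trans. apply Rplus_le_compat_r. apply Cmod_triangle.
    rewrite !Cmod_Rmult, Cmod_R.
    pose proof (Cmod_triangle t1 t2).
    pose proof (Cmod_triangle (Cplus (Cmult t1 t1) (Cmult t1 t2)) (Cmult t2 t2)).
    pose proof (Cmod_triangle (Cmult t1 t1) (Cmult t1 t2)).
    rewrite !Cmod_mult in *.
    pose proof (Rabs_pos a1); pose proof (Rabs_pos a2); pose proof (Rabs_pos a3).
    pose proof (Cmod_ge_0 (Cplus t1 t2)).
    pose proof (Cmod_ge_0 (Cplus (Cplus (Cmult t1 t1) (Cmult t1 t2)) (Cmult t2 t2))).
    assert (Cmod (Cplus t1 t2) <= 2) by lra.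
    assert (Cmod (Cplus (Cplus (Cmult t1 t1) (Cmult t1 t2)) (Cmult t2 t2)) <= 3) by nra.
    nra. }
  rewrite Rmult_comm. apply Rmult_le_compat_r; auto.
Qed.

Definition sN (k s L : R) (t : C) : C :=
  Cminus (RtoC s) (Cmult (Cmult (Cplus (RtoC k) (Cmult (RtoC (1 - k)) t)) (Cminus (RtoC 1) t))
     (Cminus (Cmult (RtoC ((1 - k) ^ 2 / k)) (Cminus (RtoC 1) t)) (RtoC (s * L)))).

Definition al0 k d s L := - (2 / d + 1) * s - k * (s * L) - (2 / d) * k * (s * L).
Definition al1 k d s L := (2 / d) * ((1 - k) ^ 2 / k) * (1 - 3 * k) - (2 / d) * (s * L) * (1 - 2 * k).
Definition al2 k d s L := (2 / d) * ((1 - k) ^ 2 / k) * (3 * k - 2) + (2 / d) * (s * L) * (1 - k).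
Definition al3 k d := (2 / d) * ((1 - k) ^ 2 / k) * (1 - k).

Lemma alg_id k d s L (t : C) : k <> 0 -> d <> 0 -> s + k * (s * L) + 2 * (1 - k) ^ 2 / d <> 0 ->
  Cmult (Cmult (RtoC (- (d / 2))) (Cplus (RtoC 1)
     (Cmult (RtoC (/ (s + k * (s * L) + 2 * (1 - k) ^ 2 / d)))
        (cubic (al0 k d s L) (al1 k d s L) (al2 k d s L) (al3 k d) t))))
     (RtoC (s + k * (s * L) + 2 * (1 - k) ^ 2 / d)) = sN k s L t.
Proof.
  intros Hk Hd HE. destruct t as [t1 t2].
  unfold sN, cubic, al0, al1, al2, al3.
  assert (HE' : (s + k * (s * L)) * d + 2 * ((1 - k) * (1 - k)) <> 0).
  { intro H. apply HE. replace (s + k * (s * L) + 2 * (1 - k) ^ 2 / d) with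
      (((s + k * (s * L)) * d + 2 * ((1 - k) * (1 - k))) / d) by (field; auto).
    rewrite H. unfold Rdiv. ring. }
  apply Ceq; simpl; field; auto.
Qed.

Lemma CLog_1 : CLog (RtoC 1) = RtoC 0.
Proof.
  unfold CLog. rewrite Cmod_1. simpl. rewrite ln_1. unfold Rdiv. rewrite Rmult_0_l, atan_0. reflexivity.
Qed.

Lemma cexp_opp_w0 d : 0 < d -> cexp (Copp ((ln (2 / d), PI) : C)) = RtoC (- (d / 2)).
Proof.
  intros Hd. unfold cexp; simpl.
  rewrite cos_neg, sin_neg, cos_PI, sin_PI, exp_Ropp, exp_ln by (apply Rdiv_lt_0_compat; lra).
  apply Ceq; simpl; field; lra.
Qed.

Lemma core_root (k d : R) : 0 < k < 1 -> 0 < d < 2 ->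
  exists L1, 0 < L1 /\ forall s L, 0 < s -> L1 <= L -> s * L * L <= 4 * (2 * (1 - k) ^ 2 / d) ->
    exists w : C, 0 < Re w /\ Re w < L /\
      Cmult (cexp (Copp w)) (RtoC (s + k * (s * L) + 2 * (1 - k) ^ 2 / d)) =
      sN k s L (Cmult (RtoC (/ L)) w).
Proof.
  intros Hk Hd.
  set (A := 2 / d). set (B := (1 - k) ^ 2 / k). set (c0 := 2 * (1 - k) ^ 2 / d).
  assert (HA : 1 < A) by (unfold A; apply Rmult_lt_reg_r with d; [lra|]; unfold Rdiv; rewrite Rmult_assoc, Rinv_l; lra).
  assert (HB : 0 < B) by (unfold B; apply Rdiv_lt_0_compat; [apply pow_lt|]; lra).
  assert (Hc0 : c0 = A * k * B) by (unfold c0, A, B; field; lra).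
  assert (Hc0p : 0 < c0) by (rewrite Hc0; apply Rmult_lt_0_compat; [apply Rmult_lt_0_compat|]; lra).
  set (ld := ln A).
  assert (Hld : 0 < ld) by (unfold ld; rewrite <- ln_1; apply ln_increasing; lra).
  set (T := ld + PI + 1).
  assert (HT : 1 < T) by (unfold T; pose proof PI_RGT_0; lra).
  set (r := Rmin 1 (ld / 2)).
  assert (Hr : 0 < r /\ r <= 1 /\ r <= ld / 2) by (unfold r; split; [apply Rmin_glb_lt; lra|split; [apply Rmin_l|apply Rmin_r]]).
  set (K1 := (8 * A + 8) + 6 * T / k).
  assert (HK1 : 0 < K1) by (unfold K1; assert (0 < 6 * T / k) by (apply Rdiv_lt_0_compat; lra); lra).
  set (x1 := Rmin (Rmin 1 (/ (8 * A))) (Rmin (/ T) (Rmin (r / (10 * K1)) (k / 360)))).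
  assert (Hx1 : 0 < x1).
  { unfold x1. repeat apply Rmin_glb_lt; try lra.
    apply Rinv_0_lt_compat; lra. apply Rinv_0_lt_compat; lra.
    apply Rdiv_lt_0_compat; lra. }
  exists (/ x1). split; [apply Rinv_0_lt_compat; auto|].
  intros s L Hs HL HsL.
  assert (HLp : 0 < L) by (pose proof (Rinv_0_lt_compat _ Hx1); lra).
  set (x := / L).
  assert (Hxp : 0 < x) by (apply Rinv_0_lt_compat; auto).
  assert (Hxx1 : x <= x1).
  { unfold x. rewrite <- (Rinv_inv x1). apply Rinv_le_contravar; auto. apply Rinv_0_lt_compat; auto. }
  assert (Hx : x <= 1 /\ 8 * A * x <= 1 /\ T * x <= 1 /\ 10 * K1 * x <= r /\ 360 * x <= k).
  { assert (x <= 1 /\ x <= / (8 * A) /\ x <= / T /\ x <= r / (10 * K1) /\ x <= k / 360).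
    { unfold x1 in Hxx1.
      pose proof (Rmin_l (Rmin 1 (/ (8 * A))) (Rmin (/ T) (Rmin (r / (10 * K1)) (k / 360)))).
      pose proof (Rmin_r (Rmin 1 (/ (8 * A))) (Rmin (/ T) (Rmin (r / (10 * K1)) (k / 360)))).
      pose proof (Rmin_l 1 (/ (8 * A))). pose proof (Rmin_r 1 (/ (8 * A))).
      pose proof (Rmin_l (/ T) (Rmin (r / (10 * K1)) (k / 360))).
      pose proof (Rmin_r (/ T) (Rmin (r / (10 * K1)) (k / 360))).
      pose proof (Rmin_l (r / (10 * K1)) (k / 360)). pose proof (Rmin_r (r / (10 * K1)) (k / 360)).
      repeat split; lra. }
    destruct H as [H1 [H2 [H3 [H4 H5]]]]. repeat split; auto.
    - apply Rmult_le_compat_l with (r := 8 * A) in H2; [|lra]. rewrite Rinv_r in H2; lra.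
    - apply Rmult_le_compat_l with (r := T) in H3; [|lra]. rewrite Rinv_r in H3; lra.
    - apply Rmult_le_compat_l with (r := 10 * K1) in H4; [|lra].
      replace (10 * K1 * (r / (10 * K1))) with r in H4 by (field; lra). lra.
    - lra. }
  destruct Hx as [Hx_1 [Hx_A [Hx_T [Hx_K Hx_k]]]].
  set (S := s * L).
  assert (HS : S <= 4 * c0 * x).
  { unfold S, x. apply Rmult_le_reg_r with L; auto. replace (4 * c0 * / L * L) with (4 * c0) by (field; lra). lra. }
  assert (HSp : 0 < S) by (unfold S; nra).
  assert (Hss : s = S * x) by (unfold S, x; field; lra).
  set (sE := s + k * S + c0).
  assert (HsE : c0 <= sE) by (unfold sE; nra).
  set (a0 := al0 k d s L). set (a1 := al1 k d s L). set (a2 := al2 k d s L). set (a3 := al3 k d).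
  assert (Ha0 : Rabs a0 <= (8 * A + 8) * c0 * x).
  { unfold a0, al0. fold A S.
    assert (s <= S) by nra.
    assert (k * S <= S) by nra. assert (A * k * S <= A * S) by nra.
    assert ((A + 1) * s <= (A + 1) * S) by nra.
    assert ((2 * A + 2) * S <= (2 * A + 2) * (4 * c0 * x)) by nra.
    assert (0 <= (8 * A + 8) * c0 * x) by nra.
    assert (0 <= A * k * S) by nra. assert (0 <= k * S) by nra.
    apply Rabs_le. split; nra. }
  assert (Ha123 : Rabs a1 + Rabs a2 + Rabs a3 <= 6 / k * c0).
  { unfold a1, a2, a3, al1, al2, al3. fold A B S.
    assert (E1 : Rabs (A * B * (1 - 3 * k) - A * S * (1 - 2 * k)) <= 2 * (A * B) + A * S).
    { apply Rabs_le. assert (0 < A * B) by nra. assert (0 < A * S) by nra. split; nra. }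
    assert (E2 : Rabs (A * B * (3 * k - 2) + A * S * (1 - k)) <= 2 * (A * B) + A * S).
    { apply Rabs_le. assert (0 < A * B) by nra. assert (0 < A * S) by nra. split; nra. }
    assert (E3 : Rabs (A * B * (1 - k)) <= A * B).
    { apply Rabs_le. assert (0 < A * B) by nra. split; nra. }
    assert (E4 : A * S <= c0 / 2) by nra.
    assert (E5 : A * B = c0 / k) by (rewrite Hc0; field; lra).
    assert (E6 : c0 / k >= c0) by (apply Rle_ge; unfold Rdiv; rewrite <- (Rmult_1_r c0) at 1;
      apply Rmult_le_compat_l; [lra|]; rewrite <- Rinv_1; apply Rinv_le_contravar; lra).
    replace (6 / k * c0) with (6 * (c0 / k)) by (field; lra).
    lra. }
  set (w0 := ((ld, PI) : C)).
  assert (Hw0 : Cmod w0 <= ld + PI).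
  { eapply Rle_trans. apply Cmod_le_sum. unfold w0; simpl. rewrite !Rabs_right; try lra.
    pose proof PI_RGT_0; lra. }
  set (th := fun v => Cmult (RtoC x) (Cplus w0 v)).
  assert (Hth : forall v, Cmod v <= r -> Cmod (th v) <= T * x).
  { intros v Hv. unfold th. rewrite Cmod_Rmult, Rabs_right by lra.
    pose proof (Cmod_triangle w0 v). rewrite Rmult_comm. apply Rmult_le_compat_r; [lra|].
    unfold T; lra. }
  set (rho := fun v => Cmult (RtoC (/ sE)) (cubic a0 a1 a2 a3 (th v))).
  assert (Hrho : forall v, Cmod v <= r -> 10 * Cmod (rho v) <= r).
  { intros v Hv. unfold rho. rewrite Cmod_Rmult, Rabs_right by (apply Rle_ge, Rlt_le, Rinv_0_lt_compat; lra).
    pose proof (Hth v Hv). pose proof (cubic_bound a0 a1 a2 a3 (th v) ltac:(lra)).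
    pose proof (Cmod_ge_0 (th v)).
    assert (Cmod (cubic a0 a1 a2 a3 (th v)) <= K1 * x * c0).
    { eapply Rle_trans; [apply H0|]. unfold K1.
      pose proof (Rabs_pos a1); pose proof (Rabs_pos a2); pose proof (Rabs_pos a3).
      assert ((Rabs a1 + Rabs a2 + Rabs a3) * Cmod (th v) <= 6 / k * c0 * (T * x)).
      { apply Rmult_le_compat; try lra. }
      replace (((8 * A + 8) + 6 * T / k) * x * c0) with ((8 * A + 8) * c0 * x + 6 / k * c0 * (T * x))
        by (field; lra). lra. }
    assert (/ sE <= / c0) by (apply Rinv_le_contravar; lra).
    assert (/ sE * Cmod (cubic a0 a1 a2 a3 (th v)) <= / c0 * (K1 * x * c0)).
    { apply Rmult_le_compat; try lra. left; apply Rinv_0_lt_compat; lra. apply Cmod_ge_0. }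
    replace (/ c0 * (K1 * x * c0)) with (K1 * x) in H4 by (field; lra). lra. }
  assert (Hrholip : forall v1 v2, Cmod v1 <= r -> Cmod v2 <= r ->
    10 * Cmod (Cminus (rho v1) (rho v2)) <= / 2 * Cmod (Cminus v1 v2)).
  { intros v1 v2 H1 H2. unfold rho.
    replace (Cminus (Cmult (RtoC (/ sE)) (cubic a0 a1 a2 a3 (th v1))) (Cmult (RtoC (/ sE)) (cubic a0 a1 a2 a3 (th v2))))
      with (Cmult (RtoC (/ sE)) (Cminus (cubic a0 a1 a2 a3 (th v1)) (cubic a0 a1 a2 a3 (th v2))))
      by (destruct (cubic a0 a1 a2 a3 (th v1)), (cubic a0 a1 a2 a3 (th v2)); apply Ceq; simpl; ring).
    rewrite Cmod_Rmult, Rabs_right by (apply Rle_ge, Rlt_le, Rinv_0_lt_compat; lra).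
    pose proof (cubic_lip a0 a1 a2 a3 (th v1) (th v2) ltac:(pose proof (Hth v1 H1); lra) ltac:(pose proof (Hth v2 H2); lra)).
    assert (Hd12 : Cmod (Cminus (th v1) (th v2)) = x * Cmod (Cminus v1 v2)).
    { unfold th. replace (Cminus (Cmult (RtoC x) (Cplus w0 v1)) (Cmult (RtoC x) (Cplus w0 v2)))
        with (Cmult (RtoC x) (Cminus v1 v2)) by (destruct v1, v2, w0; apply Ceq; simpl; ring).
      rewrite Cmod_Rmult, Rabs_right; lra. }
    rewrite Hd12 in H.
    pose proof (Cmod_ge_0 (Cminus v1 v2)).
    pose proof (Cmod_ge_0 (Cminus (cubic a0 a1 a2 a3 (th v1)) (cubic a0 a1 a2 a3 (th v2)))).
    assert (H5 : Cmod (Cminus (cubic a0 a1 a2 a3 (th v1)) (cubic a0 a1 a2 a3 (th v2))) <=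
       3 * (6 / k * c0) * (x * Cmod (Cminus v1 v2))).
    { eapply Rle_trans; [apply H|]. apply Rmult_le_compat_r. nra. lra. }
    assert (/ sE <= / c0) by (apply Rinv_le_contravar; lra).
    assert (H6 : / sE * Cmod (Cminus (cubic a0 a1 a2 a3 (th v1)) (cubic a0 a1 a2 a3 (th v2))) <=
        / c0 * (3 * (6 / k * c0) * (x * Cmod (Cminus v1 v2)))).
    { apply Rmult_le_compat; try lra. left; apply Rinv_0_lt_compat; lra. }
    replace (/ c0 * (3 * (6 / k * c0) * (x * Cmod (Cminus v1 v2)))) with
      (18 * x / k * Cmod (Cminus v1 v2)) in H6 by (field; lra).
    assert (18 * x / k <= / 20).
    { apply Rmult_le_reg_r with k; [lra|]. unfold Rdiv. rewrite Rmult_assoc, Rinv_l by lra. lra. }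
    nra. }
  set (F := fun v => Copp (CLog (Cplus (RtoC 1) (rho v)))).
  assert (Hsub1 : forall v, Cmod v <= r -> Cmod (Cminus (Cplus (RtoC 1) (rho v)) (RtoC 1)) <= 1 / 2).
  { intros v Hv. replace (Cminus (Cplus (RtoC 1) (rho v)) (RtoC 1)) with (rho v)
      by (destruct (rho v); apply Ceq; simpl; ring).
    pose proof (Hrho v Hv). lra. }
  assert (H11 : Cmod (Cminus (RtoC 1) (RtoC 1)) <= 1 / 2).
  { replace (Cminus (RtoC 1) (RtoC 1)) with (RtoC 0) by (apply Ceq; simpl; ring). rewrite Cmod_0. lra. }
  destruct (fixpoint_C F r (/ 2)) as [v [Hv HFv]].
  - lra.
  - lra.
  - intros v Hv. unfold F. rewrite Cmod_opp.
    replace (CLog (Cplus (RtoC 1) (rho v))) with (Cminus (CLog (Cplus (RtoC 1) (rho v))) (CLog (RtoC 1)))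
      by (rewrite CLog_1; destruct (CLog (Cplus (RtoC 1) (rho v))); apply Ceq; simpl; ring).
    eapply Rle_trans. apply CLog_lip; auto.
    replace (Cminus (Cplus (RtoC 1) (rho v)) (RtoC 1)) with (rho v)
      by (destruct (rho v); apply Ceq; simpl; ring).
    apply Hrho; auto.
  - intros v1 v2 H1 H2. unfold F.
    replace (Cminus (Copp (CLog (Cplus (RtoC 1) (rho v1)))) (Copp (CLog (Cplus (RtoC 1) (rho v2)))))
      with (Copp (Cminus (CLog (Cplus (RtoC 1) (rho v1))) (CLog (Cplus (RtoC 1) (rho v2)))))
      by (destruct (CLog (Cplus (RtoC 1) (rho v1))), (CLog (Cplus (RtoC 1) (rho v2))); apply Ceq; simpl; ring).
    rewrite Cmod_opp. eapply Rle_trans. apply CLog_lip; auto.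
    replace (Cminus (Cplus (RtoC 1) (rho v1)) (Cplus (RtoC 1) (rho v2))) with (Cminus (rho v1) (rho v2))
      by (destruct (rho v1), (rho v2); apply Ceq; simpl; ring).
    apply Hrholip; auto.
  - exists (Cplus w0 v).
    pose proof (re_le_Cmod v). apply Rabs_le_between in H.
    assert (HPI : PI < T - ld - 1 + 1) by (unfold T; lra).
    assert (T <= L) by (apply Rmult_le_reg_r with x; auto; unfold x at 2; rewrite Rinv_r; lra).
    destruct Hr as [Hr1 [Hr2 Hr3]]. unfold Re in H.
    split; [|split].
    + unfold w0; simpl. lra.
    + unfold w0; simpl. pose proof PI_RGT_0. unfold T in *. lra.
    +
      assert (Hre : 0 < Re (Cplus (RtoC 1) (rho v))).
      { pose proof (re_le_Cmod (rho v)). apply Rabs_le_between in H1. pose proof (Hrho v Hv).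
        change (Re (Cplus (RtoC 1) (rho v))) with (1 + Re (rho v)). lra. }
      assert (Hcv : cexp (Copp v) = Cplus (RtoC 1) (rho v)).
      { rewrite <- HFv at 1. unfold F.
        replace (Copp (Copp (CLog (Cplus (RtoC 1) (rho v))))) with (CLog (Cplus (RtoC 1) (rho v)))
          by (destruct (CLog (Cplus (RtoC 1) (rho v))); apply Ceq; simpl; ring).
        apply cexp_CLog; auto. }
      replace (Copp (Cplus w0 v)) with (Cplus (Copp w0) (Copp v)) by (destruct w0, v; apply Ceq; simpl; ring).
      rewrite cexp_add, Hcv.
      unfold w0, ld, A. rewrite cexp_opp_w0 by lra.
      replace (Cmult (RtoC (/ L)) (Cplus (ld, PI) v)) with (th v) by reflexivity.
      unfold rho, sE, S, c0, a0, a1, a2, a3.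
      apply alg_id; try lra. fold S c0. fold sE. lra.
Qed.

Lemma cexp_lin_C (al : C) (u : R) :
  cexp (Cmult al (RtoC u)) =
  ((exp (Re al * u) * cos (Im al * u), exp (Re al * u) * sin (Im al * u)) : C).
Proof.
  destruct al as [p q]. unfold cexp. apply Ceq; simpl; replace (p * u - q * 0) with (p * u) by ring; replace (p * 0 + q * u) with (q * u) by ring; reflexivity.
Qed.

Lemma deriv_cexp_lin (al : C) t0 t :
  is_derive (V := C_R_NormedModule) (fun u => cexp (Cmult al (RtoC (u - t0)))) t
    (Cmult al (cexp (Cmult al (RtoC (t - t0))))).
Proof.
  eapply is_derive_ext. intro u. symmetry. apply cexp_lin_C.
  rewrite cexp_lin_C. destruct al as [p q].
  match goal with |- is_derive _ _ ?l => replace l with ((fst l, snd l) : C) by (destruct l; reflexivity) end.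
  apply is_derive_C; auto_derive; auto; simpl; unfold Rminus; ring.
Qed.

Lemma is_derive_Cmult_l (f : R -> C) c x l :
  is_derive (V := C_R_NormedModule) f x l ->
  is_derive (V := C_R_NormedModule) (fun u => Cmult c (f u)) x (Cmult c l).
Proof.
  intros Hf. unfold is_derive in *.
  eapply filterdiff_ext_lin.
  apply (filterdiff_comp f (fun z : C_R_NormedModule => (Cmult c z : C_R_NormedModule)) _ (fun z : C_R_NormedModule => (Cmult c z : C_R_NormedModule)) Hf).
  apply filterdiff_linear. split.
  - intros [] []. destruct c. apply Ceq; simpl; unfold plus; simpl; unfold plus; simpl; ring.
  - intros k []. destruct c. apply Ceq; simpl; unfold scal; simpl; unfold scal, mult; simpl; unfold mult; simpl; ring.
  - exists (Cmod c + 1). split. pose proof (Cmod_ge_0 c); lra.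
    intros z. change (norm (Cmult c z)) with (norm (V := C_R_NormedModule) (Cmult c z)).
    rewrite <- !Cmod_norm, Cmod_mult. pose proof (Cmod_ge_0 z). nra.
  - intros y. simpl. destruct c, l. apply Ceq; simpl; unfold scal; simpl; unfold scal, mult; simpl; unfold mult; simpl; ring.
Qed.

Lemma deriv_shape c0 c1 al t0 t :
  is_derive (V := C_R_NormedModule)
    (fun u => Cplus c0 (Cmult c1 (cexp (Cmult al (RtoC (u - t0)))))) t
    (Cmult c1 (Cmult al (cexp (Cmult al (RtoC (t - t0)))))).
Proof.
  replace (Cmult c1 (Cmult al (cexp (Cmult al (RtoC (t - t0)))))) with
    (plus (zero : C_R_NormedModule) (Cmult c1 (Cmult al (cexp (Cmult al (RtoC (t - t0))))))).
  apply (is_derive_plus (K := R_AbsRing) (V := C_R_NormedModule) (fun _ : R => c0) (fun u : R => Cmult c1 (cexp (Cmult al (RtoC (u - t0)))))).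
  apply (is_derive_const (K := R_AbsRing) (V := C_R_NormedModule)).
  apply is_derive_Cmult_l, deriv_cexp_lin.
  apply plus_zero_l.
Qed.

Lemma cont_fst (f : R -> C) x : continuous f x -> continuous (fun t => fst (f t)) x.
Proof.
  intros H. apply (continuous_comp f fst). exact H.
  destruct (f x). apply continuous_fst.
Qed.

Lemma cont_snd (f : R -> C) x : continuous f x -> continuous (fun t => snd (f t)) x.
Proof.
  intros H. apply (continuous_comp f snd). exact H.
  destruct (f x). apply continuous_snd.
Qed.

Lemma cont_pair_C (f : R -> C) x : continuous (fun t => fst (f t)) x -> continuous (fun t => snd (f t)) x ->
  continuous f x.
Proof.
  intros H1 H2. apply (continuous_ext (fun t => ((fst (f t), snd (f t)) : C))).
  intro t. destruct (f t); reflexivity.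
  apply (continuous_C (fun t => fst (f t)) (fun t => snd (f t))); auto.
Qed.

Lemma contR_plus (f g : R -> R) x : continuous f x -> continuous g x -> continuous (fun t => f t + g t) x.
Proof. intros. apply (continuous_plus (K := R_AbsRing) (V := R_NormedModule) f g); auto. Qed.
Lemma contR_mult (f g : R -> R) x : continuous f x -> continuous g x -> continuous (fun t => f t * g t) x.
Proof. intros. apply (continuous_mult (K := R_AbsRing) f g); auto. Qed.
Lemma contR_opp (f : R -> R) x : continuous f x -> continuous (fun t => - f t) x.
Proof. intros. apply (continuous_opp (K := R_AbsRing) (V := R_NormedModule) f); auto. Qed.

Lemma cont_Cplus (f g : R -> C) x : continuous f x -> continuous g x -> continuous (fun t => Cplus (f t) (g t)) x.
Proof.
  intros Hf Hg. apply cont_pair_C; simpl.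
  apply contR_plus; [apply cont_fst|apply cont_fst]; auto.
  apply contR_plus; [apply cont_snd|apply cont_snd]; auto.
Qed.

Lemma cont_Cmult (f g : R -> C) x : continuous f x -> continuous g x -> continuous (fun t => Cmult (f t) (g t)) x.
Proof.
  intros Hf Hg. apply cont_pair_C; simpl.
  apply contR_plus; [|apply contR_opp]; apply contR_mult; try apply cont_fst; try apply cont_snd; auto.
  apply contR_plus; apply contR_mult; try apply cont_fst; try apply cont_snd; auto.
Qed.

Lemma cont_cexp_comp (al : C) (h : R -> R) x : continuous h x ->
  continuous (fun t => cexp (Cmult al (RtoC (h t)))) x.
Proof.
  intros Hh. apply (continuous_comp h (fun u => cexp (Cmult al (RtoC u)))); auto.
  eapply continuous_ext. intro u. rewrite <- (Rminus_0_r u) at 2. reflexivity.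
  apply (ex_derive_continuous (K := R_AbsRing) (V := C_R_NormedModule)).
  eexists. apply deriv_cexp_lin.
Qed.

Definition kk (k s : R) := / (k * s).
Definition aa (k s : R) (b : C) := Cplus b (RtoC (kk k s)).
Definition gg (k s W : R) (b : C) (u : R) :=
  Cplus (Copp (aa k s b)) (Cmult (RtoC (kk k s)) (cexp (Cmult b (RtoC (u - W))))).
Definition mW (W P : R) := (P + W - Rabs (P - W)) / 2.
Definition mm (W P : R) := (mW W P - W + Rabs (mW W P + W)) / 2.
Definition nn (W P : R) := ((P + W) - Rabs (P + W)) / 2.
Definition Zf (k s W : R) (b : C) (P : R) :=
  Cplus (Copp b) (Cmult (Cplus (gg k s W b (mm W P)) b) (cexp (Cmult (aa k s b) (RtoC (nn W P))))).

Lemma mm_right W P : 0 < W -> W <= P -> mm W P = W.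
Proof.
  intros HW HP. unfold mm, mW. rewrite (Rabs_right (P - W)) by lra.
  replace ((P + W - (P - W)) / 2) with W by field. rewrite Rabs_right by lra. field.
Qed.
Lemma mm_mid W P : 0 < W -> -W <= P <= W -> mm W P = P.
Proof.
  intros HW HP. unfold mm, mW. rewrite (Rabs_left1 (P - W)) by lra.
  replace ((P + W - - (P - W)) / 2) with P by field. rewrite Rabs_right by lra. field.
Qed.
Lemma mm_left W P : 0 < W -> P <= -W -> mm W P = -W.
Proof.
  intros HW HP. unfold mm, mW. rewrite (Rabs_left1 (P - W)) by lra.
  replace ((P + W - - (P - W)) / 2) with P by field. rewrite Rabs_left1 by lra. field.
Qed.
Lemma mm_range W P : 0 < W -> -W <= mm W P <= W.
Proof.
  intros HW. destruct (Rle_dec W P). rewrite mm_right; lra.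
  destruct (Rle_dec (-W) P). rewrite mm_mid; lra. rewrite mm_left; lra.
Qed.
Lemma nn_right W P : -W <= P -> nn W P = 0.
Proof. intros. unfold nn. rewrite Rabs_right by lra. field. Qed.
Lemma nn_left W P : P <= -W -> nn W P = P - - W.
Proof. intros. unfold nn. rewrite Rabs_left1 by lra. field. Qed.
Lemma nn_le0 W P : nn W P <= 0.
Proof. unfold nn. pose proof (Rle_abs (P + W)). lra. Qed.

Lemma cexp_mult0 (a : C) : cexp (Cmult a (RtoC 0)) = RtoC 1.
Proof.
  destruct a as [p q]; unfold cexp; simpl.
  replace (p * 0 - q * 0) with 0 by ring. replace (p * 0 + q * 0) with 0 by ring.
  rewrite exp_0, cos_0, sin_0. apply Ceq; simpl; ring.
Qed.

Lemma gg_W k s W b : k * s <> 0 -> gg k s W b W = Copp b.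
Proof.
  intros H. unfold gg, aa. rewrite Rminus_diag, cexp_mult0. destruct b. apply Ceq; simpl; ring.
Qed.

Lemma Zf_mid k s W b P : 0 < W -> -W <= P <= W -> Zf k s W b P = gg k s W b P.
Proof.
  intros HW HP. unfold Zf. rewrite mm_mid, nn_right, cexp_mult0 by lra.
  destruct (gg k s W b P), b. apply Ceq; simpl; ring.
Qed.
Lemma Zf_right k s W b P : 0 < W -> k * s <> 0 -> W <= P -> Zf k s W b P = Copp b.
Proof.
  intros HW Hks HP. rewrite <- (gg_W k s W b Hks). unfold Zf. rewrite mm_right, nn_right, cexp_mult0 by lra.
  destruct (gg k s W b W), b. apply Ceq; simpl; ring.
Qed.
Lemma Zf_left k s W b P : 0 < W -> P <= -W ->
  Zf k s W b P = Cplus (Copp b) (Cmult (Cplus (gg k s W b (-W)) b) (cexp (Cmult (aa k s b) (RtoC (P - - W))))).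
Proof.
  intros HW HP. unfold Zf. rewrite mm_left, nn_left by lra. reflexivity.
Qed.

Lemma contR_mW W x : continuous (mW W) x.
Proof.
  unfold mW. apply (continuous_ext (fun P => (P + W + - Rabs (P + - W)) * / 2)).
  intro; unfold Rdiv, Rminus; reflexivity.
  apply contR_mult; [|apply continuous_const].
  apply contR_plus; [apply contR_plus; [apply continuous_id|apply continuous_const]|].
  apply contR_opp. apply continuous_Rabs_comp. apply contR_plus; [apply continuous_id|apply continuous_const].
Qed.
Lemma contR_mm W x : continuous (mm W) x.
Proof.
  unfold mm. apply (continuous_ext (fun P => (mW W P + - W + Rabs (mW W P + W)) * / 2)).
  intro; unfold Rdiv, Rminus; reflexivity.
  apply contR_mult; [|apply continuous_const].
  apply contR_plus; [apply contR_plus; [apply contR_mW|apply continuous_const]|].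
  apply continuous_Rabs_comp. apply contR_plus; [apply contR_mW|apply continuous_const].
Qed.
Lemma contR_nn W x : continuous (nn W) x.
Proof.
  unfold nn. apply (continuous_ext (fun P => (P + W + - Rabs (P + W)) * / 2)).
  intro; unfold Rdiv, Rminus; reflexivity.
  apply contR_mult; [|apply continuous_const].
  apply contR_plus; [apply contR_plus; [apply continuous_id|apply continuous_const]|].
  apply contR_opp. apply continuous_Rabs_comp. apply contR_plus; [apply continuous_id|apply continuous_const].
Qed.

Lemma deriv_gg k s W b u :
  is_derive (V := C_R_NormedModule) (gg k s W b) u
    (Cmult (RtoC (kk k s)) (Cmult b (cexp (Cmult b (RtoC (u - W)))))).
Proof. apply deriv_shape. Qed.

Lemma cont_gg k s W b u : continuous (gg k s W b) u.
Proof.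
  apply (ex_derive_continuous (K := R_AbsRing) (V := C_R_NormedModule)). eexists. apply deriv_gg.
Qed.

Lemma cont_Zf k s W b x : continuous (Zf k s W b) x.
Proof.
  unfold Zf. apply cont_Cplus. apply continuous_const.
  apply cont_Cmult.
  - apply cont_Cplus; [|apply continuous_const].
    apply (continuous_comp (mm W) (gg k s W b)). apply contR_mm. apply cont_gg.
  - apply cont_cexp_comp. apply contR_nn.
Qed.

Lemma Re_Cmult_R (a : C) u : Re (Cmult a (RtoC u)) = Re a * u.
Proof. destruct a; simpl; ring. Qed.

Lemma exp_le_mono x y : x <= y -> exp x <= exp y.
Proof. intros [H|H]. left; apply exp_increasing; auto. subst; lra. Qed.

Lemma Zf_bounded k s W b : 0 < W -> 0 < kk k s -> 0 < Re (aa k s b) ->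
  forall P, Cmod (Zf k s W b P) <= Cmod b + (Cmod (aa k s b) + kk k s * exp (Rabs (Re b) * (2 * W)) + Cmod b).
Proof.
  intros HW Hkk Ha P. unfold Zf.
  eapply Rle_trans. apply Cmod_triangle. rewrite Cmod_opp, Cmod_mult, Cmod_cexp, Re_Cmult_R.
  apply Rplus_le_compat_l.
  assert (He : exp (Re (aa k s b) * nn W P) <= 1).
  { rewrite <- exp_0. apply exp_le_mono. pose proof (nn_le0 W P). nra. }
  assert (Hg : Cmod (Cplus (gg k s W b (mm W P)) b) <= Cmod (aa k s b) + kk k s * exp (Rabs (Re b) * (2 * W)) + Cmod b).
  { unfold gg. eapply Rle_trans. apply Cmod_triangle. apply Rplus_le_compat_r.
    eapply Rle_trans. apply Cmod_triangle. rewrite Cmod_opp, Cmod_Rmult, Cmod_cexp, Re_Cmult_R.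
    apply Rplus_le_compat_l. rewrite Rabs_right by lra. apply Rmult_le_compat_l; [lra|].
    apply exp_le_mono. pose proof (mm_range W P HW).
    pose proof (Rle_abs (Re b)). pose proof (Rle_abs (- Re b)). rewrite Rabs_Ropp in H1.
    assert (Rabs (mm W P - W) <= 2 * W) by (apply Rabs_le; lra).
    eapply Rle_trans. apply Rle_abs. rewrite Rabs_mult. apply Rmult_le_compat_l. apply Rabs_pos. auto. }
  pose proof (Cmod_ge_0 (Cplus (gg k s W b (mm W P)) b)). pose proof (exp_pos (Re (aa k s b) * nn W P)).
  nra.
Qed.

Lemma deriv_lin (c : C) u :
  is_derive (V := C_R_NormedModule) (fun t => Cmult c (RtoC t)) u c.
Proof.
  assert (H1 : is_derive (V := C_R_NormedModule) (fun t => RtoC t) u (RtoC 1)).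
  { unfold RtoC. apply (is_derive_C (fun t => t) (fun _ => 0)); auto_derive; auto. }
  pose proof (is_derive_Cmult_l (fun t => RtoC t) c u (RtoC 1) H1) as H.
  replace (Cmult c (RtoC 1)) with c in H by (destruct c; apply Ceq; simpl; ring). exact H.
Qed.

Definition Gf k s W b u :=
  Cplus (Cmult (Copp (aa k s b)) (RtoC u))
        (Cmult (Cmult (RtoC (kk k s)) (Cinv b)) (cexp (Cmult b (RtoC (u - W))))).

Lemma deriv_Gf k s W b u : b <> RtoC 0 ->
  is_derive (V := C_R_NormedModule) (Gf k s W b) u (gg k s W b u).
Proof.
  intros Hb.
  replace (gg k s W b u) with (plus (Copp (aa k s b) : C_R_NormedModule)
      (Cmult (Cmult (RtoC (kk k s)) (Cinv b)) (Cmult b (cexp (Cmult b (RtoC (u - W))))))).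
  apply (is_derive_plus (K := R_AbsRing) (V := C_R_NormedModule)).
  apply deriv_lin. apply is_derive_Cmult_l, deriv_cexp_lin.
  unfold gg. rewrite Cmult_assoc.
  replace (Cmult (Cmult (RtoC (kk k s)) (Cinv b)) b) with (RtoC (kk k s)).
  reflexivity.
  rewrite <- Cmult_assoc, Cinv_l by auto. destruct (RtoC (kk k s)); apply Ceq; simpl; ring.
Qed.

Lemma RInt_Zf k s W b : 0 < W -> k * s <> 0 -> b <> RtoC 0 ->
  RInt (V := C_R_CompleteNormedModule) (Zf k s W b) (-W) W =
  Cplus (Cmult (RtoC (- (2 * W))) (aa k s b))
        (Cmult (Cmult (RtoC (kk k s)) (Cinv b)) (Cminus (RtoC 1) (cexp (Cmult b (RtoC (-W - W)))))).
Proof.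
  intros HW Hks Hb.
  rewrite (RInt_ext (V := C_R_CompleteNormedModule) _ (gg k s W b)).
  2:{ intros x Hx. rewrite Rmin_left, Rmax_right in Hx by lra. apply Zf_mid; lra. }
  apply is_RInt_unique.
  replace (Cplus (Cmult (RtoC (- (2 * W))) (aa k s b))
        (Cmult (Cmult (RtoC (kk k s)) (Cinv b)) (Cminus (RtoC 1) (cexp (Cmult b (RtoC (-W - W)))))))
    with (minus (Gf k s W b W) (Gf k s W b (-W)) : C_R_CompleteNormedModule).
  apply (is_RInt_derive (V := C_R_CompleteNormedModule)).
  - intros x _. apply deriv_Gf; auto.
  - intros x _. apply cont_gg.
  - unfold Gf. rewrite Rminus_diag, cexp_mult0.
    generalize (Cinv b) (cexp (Cmult b (RtoC (- W - W)))). intros [] [].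
    unfold aa. destruct b. apply Ceq; simpl; unfold plus, opp; simpl; unfold plus, opp; simpl; ring.
Qed.

Definition lam (tau s k : R) (b : C) := Cmult (RtoC (/ tau)) (Cplus (Cmult (RtoC s) b) (RtoC (/ k - 1))).
Definition Ival (k s : R) (b : C) := Cmult b (Cplus (RtoC 1) (Cmult (RtoC (k * s)) b)).

Ltac cdestr := repeat match goal with
  | c : C |- _ => destruct c
  end.

Lemma eq_right tau Om k b : tau <> 0 -> k <> 0 -> Om <> 0 ->
  Cmult (RtoC tau) (Cmult (lam tau (tau * Om) k b) (Copp b)) =
  Cminus (Cplus (Cminus (Cmult (RtoC (tau * Om)) (RtoC 0)) (Copp b)) (Cmult (RtoC (/ k * 0)) (Copp b)))
    (Cmult (RtoC (/ k)) (Ival k (tau * Om) b)).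
Proof. intros. unfold lam, Ival. cdestr. apply Ceq; simpl; field; auto. Qed.

Lemma eq_mid tau Om k b e : tau <> 0 -> k <> 0 -> Om <> 0 ->
  Cmult (RtoC tau) (Cmult (lam tau (tau * Om) k b) (Cplus (Copp (aa k (tau * Om) b)) (Cmult (RtoC (kk k (tau * Om))) e))) =
  Cminus (Cplus (Cminus (Cmult (RtoC (tau * Om)) (Cmult (RtoC (kk k (tau * Om))) (Cmult b e)))
       (Cplus (Copp (aa k (tau * Om) b)) (Cmult (RtoC (kk k (tau * Om))) e)))
     (Cmult (RtoC (/ k * 1)) (Cplus (Copp (aa k (tau * Om) b)) (Cmult (RtoC (kk k (tau * Om))) e))))
    (Cmult (RtoC (/ k)) (Ival k (tau * Om) b)).
Proof. intros. unfold lam, Ival, aa, kk. cdestr. apply Ceq; simpl; field; auto. Qed.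

Lemma eq_left tau Om k b D e : tau <> 0 -> k <> 0 -> Om <> 0 ->
  Cmult (RtoC tau) (Cmult (lam tau (tau * Om) k b) (Cplus (Copp b) (Cmult D e))) =
  Cminus (Cplus (Cminus (Cmult (RtoC (tau * Om)) (Cmult D (Cmult (aa k (tau * Om) b) e)))
       (Cplus (Copp b) (Cmult D e)))
     (Cmult (RtoC (/ k * 0)) (Cplus (Copp b) (Cmult D e))))
    (Cmult (RtoC (/ k)) (Ival k (tau * Om) b)).
Proof. intros. unfold lam, Ival, aa, kk. cdestr. apply Ceq; simpl; field; auto. Qed.

Definition Nb (k s W : R) (b : C) :=
  Cminus (RtoC 1) (Cmult (Cplus (Cmult (RtoC (k * s)) (Cmult b b)) (Cmult (RtoC (2 * W)) b))
                         (Cplus (RtoC 1) (Cmult (RtoC (k * s)) b))).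

Lemma Psi_in W P : -W < P < W -> Psi W P = 1.
Proof. intros [H1 H2]. unfold Psi. destruct (Rlt_dec (- W) P); [|lra]. destruct (Rlt_dec P W); lra. Qed.
Lemma Psi_out W P : ~ (-W < P < W) -> Psi W P = 0.
Proof. intros H. unfold Psi. destruct (Rlt_dec (- W) P); auto. destruct (Rlt_dec P W); auto. lra. Qed.

Lemma construct k tau Om W b :
  0 < k < 1 -> 0 < tau -> 0 < Om -> 0 < W -> b <> RtoC 0 ->
  - (1 - k) / (k * (tau * Om)) < Re b ->
  cexp (Cmult b (RtoC (-W - W))) = Nb k (tau * Om) W b ->
  eigenfunction k Om tau W (lam tau (tau * Om) k b) (Zf k (tau * Om) W b) /\
  bounded_fun (Zf k (tau * Om) W b).
Proof.
  intros Hk Htau HOm HW Hb HReb HD.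
  set (s := tau * Om).
  assert (Hs : 0 < s) by (unfold s; nra).
  assert (Hks : k * s <> 0) by nra.
  assert (Hkk : 0 < kk k s) by (unfold kk; apply Rinv_0_lt_compat; nra).
  assert (Ha : 0 < Re (aa k s b)).
  { unfold aa. simpl. unfold kk. fold s in HReb.
    replace (- (1 - k) / (k * s)) with (/ (k * s) * - (1 - k)) in HReb by (field; lra).
    assert (/ (k * s) * - (1 - k) + / (k * s) = / (k * s) * k) by ring.
    assert (0 < / (k * s) * k) by (apply Rmult_lt_0_compat; [apply Rinv_0_lt_compat; nra | lra]).
    unfold Re in HReb. lra. }
  assert (HI : RInt (V := C_R_CompleteNormedModule) (Zf k s W b) (-W) W = Ival k s b).
  { rewrite RInt_Zf by auto. rewrite HD. unfold Nb. fold s.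
    replace (Cminus (RtoC 1) (Cminus (RtoC 1) (Cmult (Cplus (Cmult (RtoC (k * s)) (Cmult b b)) (Cmult (RtoC (2 * W)) b))
                         (Cplus (RtoC 1) (Cmult (RtoC (k * s)) b)))))
      with (Cmult b (Cmult (Cplus (Cmult (RtoC (k * s)) b) (RtoC (2 * W))) (Cplus (RtoC 1) (Cmult (RtoC (k * s)) b))))
      by (cdestr; apply Ceq; simpl; ring).
    assert (Hc : forall y z : C, Cmult (Cmult y (Cinv b)) (Cmult b z) = Cmult y z).
    { intros y z. rewrite <- Cmult_assoc, (Cmult_assoc (Cinv b) b z), Cinv_l, Cmult_1_l by auto. reflexivity. }
    rewrite Hc.
    unfold Ival, aa, kk. cdestr. apply Ceq; simpl; field; split; lra. }
  split.
  2:{ exists (Cmod b + (Cmod (aa k s b) + kk k s * exp (Rabs (Re b) * (2 * W)) + Cmod b)).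
      apply Zf_bounded; auto. }
  split; [|split; [|split]].
  - exists W. rewrite Zf_right by lra. intro H. apply Hb.
    destruct b; injection H; intros; apply Ceq; simpl; lra.
  - intros P. apply cont_Zf.
  - exists (Cmod b + (Cmod (aa k s b) + kk k s * exp (Rabs (Re b) * (2 * W)) + Cmod b)), 0.
    intros P. rewrite Rmult_0_l, Rplus_0_r. apply Zf_bounded; auto.
  - intros P HP1 HP2. fold s. rewrite HI.
    destruct (Rlt_or_le W P) as [Hr | Hr].
    + exists (RtoC 0). split.
      * apply (is_derive_ext_loc (K := R_AbsRing) (V := C_R_NormedModule) (fun _ => Copp b)).
        apply (filter_imp (fun t => W < t)). intros t Ht. rewrite Zf_right; auto; lra.
        apply open_gt; auto.
        apply (is_derive_const (K := R_AbsRing) (V := C_R_NormedModule)).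
      * rewrite Zf_right by (auto; lra). rewrite Psi_out by lra. apply eq_right; lra.
    + destruct (Rlt_or_le (-W) P) as [Hl | Hl].
      * assert (Hm : -W < P < W) by (split; auto; destruct Hr; auto; congruence).
        exists (Cmult (RtoC (kk k s)) (Cmult b (cexp (Cmult b (RtoC (P - W)))))). split.
        -- apply (is_derive_ext_loc (K := R_AbsRing) (V := C_R_NormedModule) (gg k s W b)).
           apply (filter_imp (fun t => -W < t /\ t < W)). intros t Ht. rewrite Zf_mid; auto; lra.
           apply open_and; [apply open_gt | apply open_lt | lra].
           apply deriv_gg.
        -- rewrite Zf_mid by lra. rewrite Psi_in by lra. unfold gg. apply eq_mid; lra.
      * assert (Hl' : P < -W) by (destruct Hl; auto; congruence).
        set (D := Cplus (gg k s W b (-W)) b).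
        exists (Cmult D (Cmult (aa k s b) (cexp (Cmult (aa k s b) (RtoC (P - - W)))))). split.
        -- apply (is_derive_ext_loc (K := R_AbsRing) (V := C_R_NormedModule) (fun t => Cplus (Copp b) (Cmult D (cexp (Cmult (aa k s b) (RtoC (t - - W))))))).
           apply (filter_imp (fun t => t < -W)). intros t Ht. rewrite Zf_left; auto; lra.
           apply open_lt; auto.
           apply deriv_shape.
        -- rewrite Zf_left by lra. rewrite Psi_out by lra. apply eq_left; lra.
Qed.

Lemma Psi_opp W P : Psi W (- P) = Psi W P.
Proof.
  destruct (Rlt_dec (-W) P); destruct (Rlt_dec P W).
  - rewrite !Psi_in; lra.
  - rewrite !Psi_out; lra.
  - rewrite !Psi_out; lra.
  - rewrite !Psi_out; lra.
Qed.

Lemma RInt_opp_sym (Z : R -> C) W : (forall P, continuous Z P) ->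
  RInt (V := C_R_CompleteNormedModule) (fun P => Z (- P)) (- W) W =
  RInt (V := C_R_CompleteNormedModule) Z (- W) W.
Proof.
  intros Hc.
  assert (Hex : ex_RInt (V := C_R_CompleteNormedModule) Z (- W) W).
  { apply ex_RInt_continuous. intros; apply Hc. }
  pose proof (RInt_correct _ _ _ Hex) as H.
  apply (is_RInt_opp (V := C_R_CompleteNormedModule)) in H.
  rewrite <- (Ropp_involutive W) in H at 2.
  apply (is_RInt_comp_opp (V := C_R_CompleteNormedModule)) in H.
  apply is_RInt_swap in H.
  rewrite !opp_opp in H.
  apply is_RInt_unique.
  eapply is_RInt_ext; [|exact H]. intros x _. simpl. rewrite opp_opp. reflexivity.
Qed.

Lemma reflect k Om tau W (l : C) (Z : R -> C) :
  eigenfunction k Om tau W l Z -> bounded_fun Z ->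
  eigenfunction k (- Om) tau W l (fun P => Z (- P)) /\ bounded_fun (fun P => Z (- P)).
Proof.
  intros [[P0 HP0] [Hc [[A [B HAB]] Hs]]] [M HM].
  split; [|exists M; intros; apply HM].
  split; [|split; [|split]].
  - exists (- P0). rewrite Ropp_involutive. auto.
  - intros P. apply (continuous_comp Ropp Z).
    apply (continuous_opp (K := R_AbsRing) (V := R_NormedModule) (fun x => x)). apply continuous_id.
    apply Hc.
  - exists A, B. intros P. rewrite <- (Rabs_Ropp P). apply HAB.
  - intros P H1 H2.
    destruct (Hs (- P) ltac:(lra) ltac:(lra)) as [dZ [HdZ Heq]].
    exists (Copp dZ). split.
    + replace (Copp dZ) with (scal (-1) dZ : C_R_NormedModule)
        by (destruct dZ; apply Ceq; simpl; unfold scal; simpl; unfold mult; simpl; ring).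
      apply (is_derive_comp (K := R_AbsRing) (V := C_R_NormedModule) Z Ropp P dZ (-1)); auto.
      apply (is_derive_ext (K := R_AbsRing) (V := R_NormedModule) (fun x => - x)); auto.
      auto_derive; auto.
    + rewrite RInt_opp_sym by auto. rewrite Psi_opp in Heq. rewrite Heq.
      destruct dZ, (Z (- P)), l, (RInt (V := C_R_CompleteNormedModule) Z (- W) W).
      apply Ceq; simpl; ring.
Qed.

Lemma translate k s L w : 0 < k < 1 -> 0 < s -> 0 < L ->
  Cmult (RtoC (/ s)) (sN k s L (Cmult (RtoC (/ L)) w)) =
  Nb k s (k * s * L / (2 * (1 - k))) (Cmult (RtoC (/ (2 * (k * s * L / (2 * (1 - k)))))) (Cminus w (RtoC L))).
Proof.
  intros Hk Hs HL. unfold sN, Nb. destruct w. apply Ceq; simpl; field; repeat split; lra.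
Qed.

Lemma cexp_RtoC x : cexp (RtoC x) = RtoC (exp x).
Proof. unfold cexp; simpl. rewrite cos_0, sin_0. apply Ceq; simpl; ring. Qed.

Theorem corollary2p4 (kappa Omega delta : R) :
  0 < kappa < 1 -> Omega <> 0 -> 0 < delta < 2 ->
  exists tau0 : R, 0 < tau0 /\
    forall tau W : R, 0 < tau < tau0 -> 0 < W ->
      width_eq kappa Omega delta tau W ->
      exists (lam : C) (Z : R -> C),
        0 < Re lam /\ eigenfunction kappa Omega tau W lam Z /\ bounded_fun Z.
Proof.
  intros Hk HOm Hd.
  destruct (core_root kappa delta Hk Hd) as [L1 [HL1 Hcore]].
  remember (2 * (1 - kappa) ^ 2 / delta) as c0 eqn:Hc0.
  assert (Hc0p : 0 < c0) by (subst c0; apply Rdiv_lt_0_compat; [apply Rmult_lt_0_compat; [lra|apply pow_lt]|]; lra).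
  remember (Rabs Omega) as Om' eqn:HOm'.
  assert (HOmp : 0 < Om') by (subst; apply Rabs_pos_lt; auto).
  exists (c0 * exp (- L1) / Om'). split.
  { apply Rdiv_lt_0_compat; auto. apply Rmult_lt_0_compat; auto. apply exp_pos. }
  intros tau W [Htau Htau0] HW Hwe.
  remember (tau * Om') as s eqn:Hs.
  assert (Hsp : 0 < s) by (subst; nra).
  remember ((1 - kappa) / (kappa * s) * (2 * W)) as L eqn:HL.
  assert (HLp : 0 < L) by (subst L; apply Rmult_lt_0_compat; [apply Rdiv_lt_0_compat; [lra| repeat apply Rmult_lt_0_compat; lra]|lra]).
  assert (HWL : W = kappa * s * L / (2 * (1 - kappa))) by (subst L; field; lra).
  assert (Hexp : exp L = 1 + kappa * L + c0 / s).
  { unfold width_eq in Hwe. rewrite <- HOm' in Hwe.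
    replace (kappa * tau * Om') with (kappa * s) in Hwe by (subst; ring).
    replace (tau * Om' * delta) with (s * delta) in Hwe by (subst; ring).
    replace (tau * Om') with s in Hwe by (subst; ring).
    rewrite <- HL in Hwe.
    replace (1 - kappa) with (kappa * s * L / (2 * W)) in Hwe at 2 by (subst L; field; nra).
    subst c0. apply (f_equal (fun x => x + 1)) in Hwe. ring_simplify in Hwe. rewrite <- Hwe.
    field. nra. }
  assert (HsL : s * L * L <= 4 * c0).
  { assert (H1 : exp L = exp (L / 2) * exp (L / 2)) by (rewrite <- exp_plus; f_equal; field).
    pose proof (exp_ineq1_le (L / 2)).
    assert (1 + L + L * L / 4 <= exp L) by (rewrite H1; nra).
    assert (L * L / 4 <= c0 / s) by nra.
    apply Rmult_le_compat_l with (r := s) in H2; [|lra].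
    replace (s * (c0 / s)) with c0 in H2 by (field; lra). lra. }
  assert (HLL1 : L1 <= L).
  { destruct (Rle_lt_dec L1 L) as [|Hlt]; auto. exfalso.
    assert (exp L < exp L1) by (apply exp_increasing; auto).
    assert (s < c0 * exp (- L1)).
    { subst s. apply Rmult_lt_compat_r with (r := Om') in Htau0; auto.
      replace (c0 * exp (- L1) / Om' * Om') with (c0 * exp (- L1)) in Htau0 by (field; lra). lra. }
    assert (s * exp L1 < c0).
    { apply Rmult_lt_compat_r with (r := exp L1) in H0; [|apply exp_pos].
      rewrite Rmult_assoc, <- exp_plus, Rplus_opp_l, exp_0, Rmult_1_r in H0. auto. }
    assert (exp L1 < c0 / s).
    { apply Rmult_lt_reg_l with s; auto. replace (s * (c0 / s)) with c0 by (field; lra). lra. }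
    assert (0 < kappa * L) by nra. lra. }
  destruct (Hcore s L Hsp HLL1 HsL) as [w [Hw1 [Hw2 Hweq]]].
  set (b := Cmult (RtoC (/ (2 * W))) (Cminus w (RtoC L))).
  assert (HReb : Re b = (1 - kappa) / (kappa * s * L) * Re w - (1 - kappa) / (kappa * s)).
  { unfold b. destruct w. simpl. rewrite HWL. field. repeat split; lra. }
  assert (Hb1 : - (1 - kappa) / (kappa * s) < Re b).
  { rewrite HReb. assert (0 < (1 - kappa) / (kappa * s * L) * Re w).
    { apply Rmult_lt_0_compat; auto. apply Rdiv_lt_0_compat; [lra| repeat apply Rmult_lt_0_compat; lra]. }
    unfold Rdiv. lra. }
  assert (Hb0 : b <> RtoC 0).
  { intro H. assert (Re b = 0) by (rewrite H; reflexivity).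
    rewrite HReb in H0. 
    assert ((1 - kappa) / (kappa * s * L) * Re w < (1 - kappa) / (kappa * s)).
    { replace ((1 - kappa) / (kappa * s)) with ((1 - kappa) / (kappa * s * L) * L) by (field; lra).
      apply Rmult_lt_compat_l; auto. apply Rdiv_lt_0_compat; [lra| repeat apply Rmult_lt_0_compat; lra]. }
    lra. }
  assert (HD : cexp (Cmult b (RtoC (- W - W))) = Nb kappa s W b).
  { pose proof (translate kappa s L w Hk Hsp HLp) as Htr. rewrite <- HWL in Htr. fold b in Htr.
    rewrite <- Htr, <- Hweq.
    replace (Cmult b (RtoC (- W - W))) with (Cplus (RtoC L) (Copp w))
      by (unfold b; destruct w; apply Ceq; simpl; field; lra).
    rewrite cexp_add, cexp_RtoC, Hexp.
    destruct (cexp (Copp w)). apply Ceq; simpl; field; lra. }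
  assert (HRelam : 0 < Re (lam tau s kappa b)).
  { unfold lam. replace (Re (Cmult (RtoC (/ tau)) (Cplus (Cmult (RtoC s) b) (RtoC (/ kappa - 1)))))
      with (/ tau * (s * Re b + (/ kappa - 1))) by (destruct b; simpl; ring).
    apply Rmult_lt_0_compat. apply Rinv_0_lt_compat; auto.
    apply Rmult_lt_compat_l with (r := s) in Hb1; auto.
    replace (s * (- (1 - kappa) / (kappa * s))) with (1 - / kappa) in Hb1 by (field; lra). lra. }
  exists (lam tau s kappa b).
  destruct (Rle_lt_dec 0 Omega) as [HO | HO].
  - assert (HO' : Rabs Omega = Omega) by (apply Rabs_right; lra).
    subst Om'. subst s. rewrite HO' in *.
    exists (Zf kappa (tau * Omega) W b).
    split; auto. apply construct; auto; lra.
  - assert (HO' : Rabs Omega = - Omega) by (apply Rabs_left; lra).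
    subst Om'. subst s. rewrite HO' in *.
    destruct (construct kappa tau (- Omega) W b Hk Htau ltac:(lra) HW Hb0 Hb1 HD) as [He Hbd].
    exists (fun P => Zf kappa (tau * - Omega) W b (- P)).
    split; auto.
    pose proof (reflect _ _ _ _ _ _ He Hbd) as [He' Hbd'].
    rewrite Ropp_involutive in He'. auto.
Qed.
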